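(* Each of the sets $\mathcal{L}_{SE}=\{(M,q)\mid SE[U](M)>q\}$, $\mathcal{L}_{ME}=\{(M,q)\mid ME[U](M)>q\}$ and $\mathcal{L}_{GE}=\{(M,q)\mid GE[U](M)>q\}$ is a liveness hyperproperty. That is, for each of them and for every rational number $q$, the set of programs $M$ with $(M,q)$ in it is a liveness hyperproperty.
   Context: Stores $\sigma$ map program variables to values. There is a designated high-security input variable $H$ and a low-security output variable $O$. A trace is a sequence of stores. $\Psi_{\mathrm{inf}}$ and $\Psi_{\mathrm{fin}}$ denote the sets of infinite and of finite traces. For a finite trace $t$, $t\circ t'$ is the concatenation of $t$ and $t'$. A set of traces is deterministic if any two of its traces that start with stores having the same value of $H$ are equal. A program is a deterministic set $M\subseteq\Psi_{\mathrm{inf}}$. Its input domain $\mathbb{H}_M=\{\sigma_0(H)\mid \sigma_0;\sigma_1;\dots\in M\}$ is finite and nonempty. Input domains are not bounded in size: the values of $H$ range over an unbounded set. For $h\in\mathbb{H}_M$, $M(h)$ is the output trace $(\sigma_1(O),\sigma_2(O),\dots)$ of the unique trace $\sigma_0;\sigma_1;\dots$ of $M$ with $\sigma_0(H)=h$. Output traces may contain the symbol $\bot$, which denotes termination. Observation is termination-insensitive: $M(h)=o$ means that for all $i$, $o_i=\bot$ or $M(h)_i=\bot$ or $M(h)_i=o_i$. Given a distribution $\mu$ on $\mathbb{H}_M$, put $\mu(O=o)=\sum_{h:\,M(h)=o}\mu(H=h)$, with joint and conditional probabilities induced accordingly. $U$ denotes the uniform distribution on $\mathbb{H}_M$. The following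 are defined, with logarithms base 2. - Shannon entropy: $\mathcal{H}[\mu](X)=\sum_x\mu(X=x)\log\frac1{\mu(X=x)}$. - Conditional Shannon entropy: $\mathcal{H}[\mu](Y|Z)=\sum_z\mu(Z=z)\sum_y\mu(Y=y|Z=z)\log\frac1{\mu(Y=y|Z=z)}$. - $SE[\mu](M)=\mathcal{H}[\mu](H)-\mathcal{H}[\mu](H|O)$. - $\mathcal{V}[\mu](X)=\max_x\mu(X=x)$ and $\mathcal{V}[\mu](X|Y)=\sum_y\mu(Y=y)\max_x\mu(X=x|Y=y)$. - $ME[\mu](M)=\log\frac1{\mathcal{V}[\mu](H)}-\log\frac1{\mathcal{V}[\mu](H|O)}$. - Guessing entropy: $\mathcal{G}[\mu](X)=\sum_{1\le i\le m}i\,\mu(X=x_i)$, where $x_1,\dots,x_m$ enumerates the sample space with $\mu(X=x_i)$ non-increasing in $i$. - $\mathcal{G}[\mu](X|Y)=\sum_y\mu(Y=y)\sum_i i\,\mu(X=x_i|Y=y)$, with the ordering chosen for each $y$ so that these conditional probabilities are non-increasing. - $GE[\mu](M)=\mathcal{G}[\mu](H)-\mathcal{G}[\mu](H|O)$. Let $\mathit{Prop}$ be the set of programs and $\mathit{Obs}$ the set of finite sets of finite traces that are deterministic. For $S\in\mathit{Obs}$ and $T\in\mathit{Prop}$, $S\le T$ iff for every $t\in S$ there is $t'$ with $t\circ t'\in T$. A hyperproperty is a set $P\subseteq\mathit{Prop}$. $P$ is a liveness hyperproperty iff for every $S\in\mathit{Obs}$ there is $S'\in\mathit{Prop}$ with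 $S\le S'$ and $S'\in P$. A set $\mathcal{P}$ of pairs (program, rational) is called a liveness hyperproperty iff for every rational $q$ the set $\{M\mid(M,q)\in\mathcal{P}\}$ is a liveness hyperproperty. *)

(* Defs.v *)
From HB Require Import structures.
From mathcomp Require Import all_boot all_order all_algebra.
From mathcomp Require Import all_classical all_reals.
From mathcomp Require Import exp.
Set Implicit Arguments. Unset Strict Implicit. Unset Printing Implicit Defensive.
Import Order.TTheory GRing.Theory Num.Theory.
Local Open Scope classical_set_scope.
Local Open Scope ring_scope.

(* Program variables are natural numbers; H is variable 0, O is variable 1.
   Values are [option nat]: [None] is the termination symbol bot, [Some n]
   ordinary values (an unbounded set). *)
Definition var := nat.
Definition val := option nat.
Definition Hv : var := 0%N.
Definition Ov : var := 1%N.
Definition store := var -> val.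
Definition itrace := nat -> store.
Definition ftrace := seq store.
Definition otrace := nat -> val.

Definition tcat (t : ftrace) (t' : itrace) : itrace :=
  fun i => nth (t' (i - size t)%N) t i.

Definition det_inf (M : set itrace) : Prop :=
  forall t1 t2, M t1 -> M t2 -> t1 0%N Hv = t2 0%N Hv -> t1 = t2.

Definition det_fin (S : set ftrace) : Prop :=
  forall t1 t2 s1 s2 r1 r2, S t1 -> S t2 -> t1 = s1 :: r1 -> t2 = s2 :: r2 ->
    s1 Hv = s2 Hv -> t1 = t2.

Definition indom (M : set itrace) : set val := [set t 0%N Hv | t in M].

Definition is_program (M : set itrace) : Prop :=
  det_inf M /\ finite_set (indom M) /\ indom M !=set0.

Definition is_obs (S : set ftrace) : Prop := finite_set S /\ det_fin S.

Definition obs_le (S : set ftrace) (T : set itrace) : Prop :=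
  forall t, S t -> exists t', T (tcat t t').

Definition liveness (P : set itrace -> Prop) : Prop :=
  forall S, is_obs S -> exists S', is_program S' /\ obs_le S S' /\ P S'.

Definition liveness_q (PP : set itrace -> rat -> Prop) : Prop :=
  forall q : rat, liveness (fun M => PP M q).

Definition out (t : itrace) : otrace := fun i => t i.+1 Ov.

(* termination-insensitive equality  "M(h) = o" *)
Definition ti_eq (a o : otrace) : Prop :=
  forall i, o i = None \/ a i = None \/ a i = o i.

Definition outputs (M : set itrace) (h : val) (o : otrace) : Prop :=
  exists t, M t /\ t 0%N Hv = h /\ ti_eq (out t) o.

(* sample space of O: the output traces of M *)
Definition outset (M : set itrace) : set otrace := [set out t | t in M].

Section Measures.
Variable R : realType.

Definition log2 (x : R) : R := ln x / ln 2.

Definition ind (P : Prop) : R := (asbool P)%:R.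

(* uniform distribution U on the input domain *)
Definition ncard (M : set itrace) : R := \sum_(h \in indom M) (1 : R).
Definition pH (M : set itrace) (h : val) : R := 1 / ncard M.
Definition pHO (M : set itrace) (h : val) (o : otrace) : R :=
  ind (outputs M h o) * pH M h.
Definition pO (M : set itrace) (o : otrace) : R :=
  \sum_(h \in indom M) pHO M h o.
Definition pHgO (M : set itrace) (h : val) (o : otrace) : R :=
  pHO M h o / pO M o.

Definition shannonH (M : set itrace) : R :=
  \sum_(h \in indom M) pH M h * log2 (1 / pH M h).
Definition shannonHgO (M : set itrace) : R :=
  \sum_(o \in outset M) pO M o *
    \sum_(h \in indom M) pHgO M h o * log2 (1 / pHgO M h o).
Definition SE (M : set itrace) : R := shannonH M - shannonHgO M.

Definition vulnH (M : set itrace) : R := sup [set pH M h | h in indom M].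
Definition vulnHgO (M : set itrace) : R :=
  \sum_(o \in outset M) pO M o * sup [set pHgO M h o | h in indom M].
Definition ME (M : set itrace) : R :=
  log2 (1 / vulnH M) - log2 (1 / vulnHgO M).

(* guessing entropy of a distribution p over a finite sample space A:
   sum_i i * p(x_i) for an enumeration x_1..x_m of A with p(x_i)
   non-increasing (the value does not depend on which such enumeration). *)
Definition guess_enum (T : choiceType) (A : set T) (p : T -> R) : set (seq T) :=
  [set s | uniq s /\ [set` s] = A /\ sorted (fun x y => p y <= p x) s].
Definition guessG (T : choiceType) (A : set T) (p : T -> R) : R :=
  let s := xget [::] (guess_enum A p) in
  \sum_(k <- zip (iota 1 (size s)) s) (k.1)%:R * p k.2.

Definition guessH (M : set itrace) : R := guessG (indom M) (pH M).
Definition guessHgO (M : set itrace) : R :=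
  \sum_(o \in outset M) pO M o * guessG (indom M) (fun h => pHgO M h o).
Definition GE (M : set itrace) : R := guessH M - guessHgO M.

End Measures.

Definition L_SE (R : realType) : set itrace -> rat -> Prop :=
  fun M q => ratr q < SE R M.
Definition L_ME (R : realType) : set itrace -> rat -> Prop :=
  fun M q => ratr q < ME R M.
Definition L_GE (R : realType) : set itrace -> rat -> Prop :=
  fun M q => ratr q < GE R M.

(* Main.v *)
Require Import Defs.
From HB Require Import structures.
From mathcomp Require Import all_boot all_order all_algebra.
From mathcomp Require Import all_classical all_reals.
From mathcomp Require Import exp.
From mathcomp Require Import zify ring lra.
Set Implicit Arguments. Unset Strict Implicit. Unset Printing Implicit Defensive.
Import Order.TTheory GRing.Theory Num.Theory.
Local Open Scope classical_set_scope.
Local Open Scope ring_scope.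

Section Nice.
Variable R : realType.
Variables (M : set itrace) (s : seq Defs.val) (T : Defs.val -> itrace).
Hypothesis us : uniq s.
Hypothesis s0 : s != [::].
Hypothesis MT : M = [set T h | h in [set` s]].
Hypothesis T0 : forall h, T h 0%N Hv = h.
Hypothesis Tinj : forall h h', h \in s -> h' \in s -> ti_eq (out (T h)) (out (T h')) -> h = h'.

Let n := size s.
Lemma n_gt0 : (0 < n)%N. Proof. by rewrite /n lt0n size_eq0. Qed.
Lemma nR_neq0 : (n%:R : R) != 0. Proof. by rewrite pnatr_eq0 -lt0n n_gt0. Qed.

Lemma indomE : indom M = [set` s].
Proof.
rewrite /indom MT; apply/seteqP; split=> x /=.
  by case=> t [h hs <-] <-; rewrite T0.
by move=> xs; exists (T x); [exists x|rewrite T0].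
Qed.

Lemma outputsE h h' : h' \in s -> outputs M h (out (T h')) <-> h = h'.
Proof.
move=> h's; split.
  case=> t [+ [<- ti]]; rewrite MT => -[h'' h''s Th]; subst t.
  rewrite T0; apply: Tinj => //; exact: ti.
move=> ->; exists (T h'); split; first by rewrite MT; exists h'.
by split => // i; right; right.
Qed.

Lemma outsetE : outset M = [set` map (fun h => out (T h)) s].
Proof.
rewrite /outset MT; apply/seteqP; split=> x /=.
  by case=> t [h hs <-] <-; apply/mapP; exists h.
by case/mapP=> h hs ->; exists (T h) => //; exists h.
Qed.

Lemma map_uniq : uniq (map (fun h => out (T h)) s).
Proof.
rewrite map_inj_in_uniq // => h h' hs h's e; apply: Tinj => //.
by rewrite e => i; right; right.
Qed.

Lemma fsumE (I : choiceType) (r : seq I) (F : I -> R) : uniq r ->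
  \sum_(i \in [set` r]) F i = \sum_(i <- r) F i.
Proof. by move=> ur; rewrite -fsbig_seq. Qed.

Lemma sum_cst (I : Type) (r : seq I) (c : R) : \sum_(i <- r) c = c *+ size r.
Proof. by elim: r => [|a r IH]; rewrite ?big_nil ?big_cons ?IH ?mulrS. Qed.

Lemma sum_eq (r : seq Defs.val) x : \sum_(i <- r) (((i == x) : nat)%:R : R) = (count_mem x r)%:R.
Proof. by elim: r => [|a r IH]; rewrite ?big_nil ?big_cons ?IH //= natrD eq_sym. Qed.

Lemma ncardE : ncard R M = n%:R.
Proof. by rewrite /ncard indomE fsumE // sum_cst. Qed.

Lemma pHE h : pH R M h = 1 / n%:R.
Proof. by rewrite /pH ncardE. Qed.

Lemma indE (x y : Defs.val) : ind R (x = y) = (x == y)%:R.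
Proof. rewrite /ind; case: eqP => [->|ne]; [by rewrite asboolT | by rewrite asboolF]. Qed.

Lemma pHOE h h' : h' \in s -> pHO R M h (out (T h')) = (h == h')%:R / n%:R.
Proof.
move=> h's; rewrite /pHO pHE mul1r.
have [->|ne] := eqVneq h h'.
  by rewrite /ind asboolT //; apply/outputsE.
rewrite /ind asboolF //.
by move/outputsE => /(_ h's) /eqP; rewrite (negbTE ne).
Qed.

Lemma pOE h' : h' \in s -> pO R M (out (T h')) = 1 / n%:R.
Proof.
move=> h's; rewrite /pO indomE fsumE //.
under eq_bigr do rewrite pHOE //.
by rewrite -big_distrl /= sum_eq count_uniq_mem // h's mul1r.
Qed.

Lemma pHgOE h h' : h' \in s -> pHgO R M h (out (T h')) = (h == h')%:R.
Proof.
move=> h's; rewrite /pHgO pHOE // pOE // mul1r -mulrA divff ?mulr1 //.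
by rewrite invr_eq0 nR_neq0.
Qed.

Lemma sum_outset (F : otrace -> R) :
  \sum_(o \in outset M) F o = \sum_(h <- s) F (out (T h)).
Proof. by rewrite outsetE fsumE ?map_uniq // big_map. Qed.

Lemma log2_1 : log2 (1 : R) = 0.
Proof. by rewrite /log2 ln1 mul0r. Qed.

Lemma shannonHgOE : shannonHgO R M = 0.
Proof.
rewrite /shannonHgO sum_outset big_seq big1 // => h' h's.
rewrite indomE fsumE // big1 ?mulr0 // => h _.
rewrite pHgOE //; case: eqP => _; first by rewrite divr1 log2_1 mulr0.
by rewrite mul0r.
Qed.

Lemma shannonHE : shannonH R M = log2 n%:R.
Proof.
rewrite /shannonH indomE fsumE //.
under eq_bigr do rewrite pHE.
by rewrite sum_cst invf_div divr1 -mulrnAl -mulr_natr div1r mulVf ?nR_neq0 // !mul1r.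
Qed.

Lemma SEE : SE R M = log2 n%:R.
Proof. by rewrite /SE shannonHE shannonHgOE subr0. Qed.

Lemma sup_eq1 (E : set R) : E 1 -> (forall y, E y -> y <= 1) -> sup E = 1.
Proof.
move=> E1 Ele; apply/le_anti/andP; split.
  by apply: ge_sup; [exists 1 | move=> y /Ele].
by apply: sup_upper_bound => //; split; [exists 1 | exists 1 => y /Ele].
Qed.

Lemma vulnHE : vulnH R M = 1 / n%:R.
Proof.
rewrite /vulnH indomE.
have -> : [set pH R M h | h in [set` s]] = [set 1 / n%:R].
  apply/seteqP; split=> x /=; first by case=> h _ <-; rewrite pHE.
  move=> ->; case: s s0 => [//|a r _]; exists a; first by rewrite /= inE eqxx.
  by rewrite pHE.
by rewrite sup1.
Qed.

Lemma vulnHgOE : vulnHgO R M = 1.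
Proof.
rewrite /vulnHgO sum_outset big_seq.
under eq_bigr => h' h's.
  rewrite pOE // indomE sup_eq1; first over.
    by exists h' => //; rewrite pHgOE // eqxx.
  by move=> y [h _ <-]; rewrite pHgOE //; case: eqP.
by rewrite -big_seq sum_cst mulr1 -[_ *+ size s]mulr_natr div1r mulVf ?nR_neq0.
Qed.

Lemma MEE : ME R M = log2 (n%:R : R).
Proof. by rewrite /ME vulnHE vulnHgOE invf_div divr1 mul1r divr1 log2_1 subr0. Qed.

Lemma guess_xget (p : Defs.val -> R) :
  guess_enum [set` s] p (xget [::] (guess_enum [set` s] p)).
Proof.
apply: xgetPex; exists (sort (fun x y => p y <= p x) s); split.
  by rewrite sort_uniq.
split; last by apply: sort_sorted => x y; exact: le_total.
by apply/seteqP; split=> x /=; rewrite mem_sort.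
Qed.

Lemma guess_perm (p : Defs.val -> R) s' : guess_enum [set` s] p s' -> perm_eq s s'.
Proof.
case=> us' [e _]; apply: uniq_perm => // x.
apply/idP/idP => hx.
  by have : [set` s'] x by rewrite e.
by have : [set` s] x by rewrite -e.
Qed.

Lemma zip_cst (c : R) (r : seq Defs.val) m :
  \sum_(k <- zip (iota m (size r)) r) k.1%:R * c = c * \sum_(i <- iota m (size r)) (i%:R : R).
Proof.
elim: r m => [|a r IH] m /=; first by rewrite !big_nil mulr0.
by rewrite !big_cons IH mulrDr mulrC.
Qed.

Lemma zip_ind (x : Defs.val) r m : uniq r ->
  \sum_(k <- zip (iota m (size r)) r) k.1%:R * (((k.2 == x) : nat)%:R : R)
    = (x \in r)%:R * (m + index x r)%:R.
Proof.
elim: r m => [|a r IH] m /=; first by rewrite big_nil mul0r.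
case/andP=> ar ur; rewrite big_cons /= IH // in_cons.
have [ax|ax] := eqVneq a x.
  by subst a; rewrite (negbTE ar) mul0r addr0 mulr1 mul1r addn0.
rewrite mulr0 add0r /=.
by rewrite addSnnS.
Qed.

Lemma sum_iota k : 2 * \sum_(i <- iota 1 k) (i%:R : R) = (k * k.+1)%:R.
Proof.
elim: k => [|k IH]; first by rewrite big_nil mulr0.
have -> : iota 1 k.+1 = iota 1 k ++ [:: k.+1] by rewrite -[k.+1]addn1 iotaD add1n addn1.
rewrite big_cat big_seq1 mulrDr IH -natrM -natrD; congr (_%:R).
lia.
Qed.

Lemma guessHE : guessH R M = (n%:R + 1) / 2.
Proof.
rewrite /guessH indomE.
have -> : pH R M = fun _ => 1 / n%:R by apply: funext => h; exact: pHE.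
rewrite /guessG /=.
have := guess_xget (fun _ => 1 / n%:R).
set s' := xget _ _ => /guess_perm /perm_size ss'.
rewrite zip_cst -ss' -/n.
apply: (mulIf (x := 2)); first by rewrite pnatr_eq0.
rewrite -mulrA (mulrC _ 2) sum_iota mulfVK ?pnatr_eq0 //.
by rewrite natrM div1r mulKf ?nR_neq0 // -addn1 natrD.
Qed.

Lemma guess_ind h' : h' \in s ->
  guessG [set` s] (fun h => (((h == h') : nat)%:R : R)) = 1.
Proof.
move=> h's; rewrite /guessG /=.
have := guess_xget (fun h => (((h == h') : nat)%:R : R)).
set s' := xget _ _ => G; have P := guess_perm G.
case: G => us' [_ ss'].
rewrite zip_ind // -(perm_mem P) h's mul1r.
suff -> : index h' s' = 0%N by [].
move: ss' (perm_mem P h'); rewrite h's.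
case: (s') => [//|y r] /= pa; case: eqP => // yh hr.
have tr : transitive (fun x y : Defs.val => (((y == h') : nat)%:R : R) <= ((x == h') : nat)%:R).
  by move=> a b c ba cb; exact: le_trans cb ba.
have := order_path_min tr pa => /allP /(_ h').
move: hr; rewrite in_cons (introF eqP (nesym yh)) /= => /esym hr /(_ hr).
by rewrite eqxx (introF eqP yh) ler_nat.
Qed.

Lemma guessHgOE : guessHgO R M = 1.
Proof.
rewrite /guessHgO indomE sum_outset big_seq.
under eq_bigr => h' h's.
  have -> : (fun h => pHgO R M h (out (T h'))) = (fun h => (((h == h') : nat)%:R : R)).
    by apply: funext => h; rewrite pHgOE.
  rewrite guess_ind // pOE // mulr1; over.
by rewrite -big_seq sum_cst -[_ *+ size s]mulr_natr div1r mulVf ?nR_neq0.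
Qed.

Lemma GEE : GE R M = (n%:R - 1) / 2.
Proof.
rewrite /GE guessHE guessHgOE.
apply: (mulIf (x := 2)); first by rewrite pnatr_eq0.
rewrite mulrBl !mulfVK ?pnatr_eq0 // mul1r.
by rewrite -[2]/(1 + 1)%:R natrD; ring.
Qed.

End Nice.

Section Construct.
Variable S : set ftrace.
Hypothesis obsS : is_obs S.

Definition code (h : Defs.val) : nat := if h is Some m then m.+1 else 0%N.
Definition st (h : Defs.val) : store := fun v => if v == Hv then h else Some (code h).
Definition preP (h : Defs.val) : set ftrace :=
  fun t => S t /\ exists s0 r, t = s0 :: r /\ s0 Hv = h.
Definition pre (h : Defs.val) : ftrace := xget [::] (preP h).
Definition Tc (h : Defs.val) : itrace := tcat (pre h) (fun _ => st h).

Lemma Tc0 h : Tc h 0%N Hv = h.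
Proof.
rewrite /Tc /tcat /pre; case: xgetP => [x _ [_ [s0 [r [-> <-]]]]|_] //=.
Qed.

Lemma Tc_out h i : (size (pre h) <= i)%N -> out (Tc h) i = Some (code h).
Proof.
move=> hi; rewrite /out /Tc /tcat nth_default; last exact: leqW.
by rewrite /st.
Qed.

Lemma Tc_inj h h' : ti_eq (out (Tc h)) (out (Tc h')) -> h = h'.
Proof.
move=> /(_ (maxn (size (pre h)) (size (pre h')))).
rewrite !Tc_out ?leq_maxl ?leq_maxr //.
case=> [//|[//|[]]].
by case: h => [a|]; case: h' => [b|] //= [->].
Qed.

Lemma pre_eq t s0 r : S t -> t = s0 :: r -> pre (s0 Hv) = t.
Proof.
move=> St et; have Pt : preP (s0 Hv) t by split=> //; exists s0, r.
have := xgetI [::] Pt; rewrite -/(pre _).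
case=> Sp [s1 [r1 [ep e1]]].
have := obsS.2 _ _ _ _ _ _ Sp St ep et e1; done.
Qed.

End Construct.

Definition hdH (t : ftrace) : Defs.val := if t is s0 :: _ then s0 Hv else None.

Lemma big_prog (R : realType) (S : set ftrace) (K : nat) : is_obs S ->
  exists M, is_program M /\ obs_le S M /\ exists n : nat, (K.+1 <= n)%N /\
    SE R M = log2 (n%:R : R) /\ ME R M = log2 (n%:R : R) /\ GE R M = (n%:R - 1) / 2.
Proof.
move=> obsS.
have : finite_set [set hdH t | t in S] by apply: finite_image; exact: obsS.1.
case/finite_seqP => e He.
pose s := undup (e ++ map Some (iota 0 K.+1)).
have us : uniq s by exact: undup_uniq.
have sub : {subset map Some (iota 0 K.+1) <= s}.
  by move=> x hx; rewrite mem_undup mem_cat hx orbT.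
have Kn : (K.+1 <= size s)%N.
  have -> : K.+1 = size (map Some (iota 0 K.+1)) by rewrite size_map size_iota.
  apply: uniq_leq_size => //; rewrite map_inj_uniq ?iota_uniq //; by move=> a b []...
have s0s : Some 0%N \in s by apply: sub; apply/mapP; exists 0%N; rewrite ?mem_iota.
have sn0 : s != [::] by case: (s) s0s.
pose M := [set Tc S h | h in [set` s]].
have MT : M = [set Tc S h | h in [set` s]] by [].
have Tinj : forall h h', h \in s -> h' \in s -> ti_eq (out (Tc S h)) (out (Tc S h')) -> h = h'.
  by move=> h h' _ _; apply: Tc_inj.
exists M; split.
  split.
    by move=> t1 t2 [h1 _ <-] [h2 _ <-]; rewrite !Tc0 => ->.
  rewrite (indomE MT (Tc0 S)); split; first exact: finite_seq.
  by exists (Some 0%N).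
split.
  move=> t St; case: t St => [|s0 r] St.
    exists (Tc S (Some 0%N)); exists (Some 0%N) => //.
    by apply: funext => i; rewrite /tcat nth_nil subn0.
  exists (fun _ => st (s0 Hv)); exists (s0 Hv).
    rewrite /= mem_undup mem_cat.
    have : [set` e] (s0 Hv) by rewrite -He; exists (s0 :: r).
    by move=> /= ->.
  by rewrite /Tc (pre_eq obsS St (erefl _)).
exists (size s); split => //.
split; first exact: (SEE R us sn0 MT (Tc0 S) Tinj).
split; first exact: (MEE R us sn0 MT (Tc0 S) Tinj).
exact: (GEE R us sn0 MT (Tc0 S) Tinj).
Qed.

Lemma key (R : realType) (q : rat) : exists K : nat, forall n : nat, (K.+1 <= n)%N ->
  ratr q < log2 (n%:R : R) /\ (ratr q : R) < (n%:R - 1) / 2.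
Proof.
set x : R := `|ratr q|.
have x0 : 0 <= 2 * x + 1 by rewrite addr_ge0 ?mulr_ge0 ?normr_ge0.
have := archi_boundP x0; set kk := Num.bound _ => hk.
have qx : ratr q <= x by exact: ler_norm.
have x0' : 0 <= x by exact: normr_ge0.
exists (2 ^ kk)%N => n hn.
have kn : (kk < n)%N by apply: leq_trans hn; rewrite ltnS ltnW // ltn_expl.
have l2 : 0 < ln (2 : R) by apply: ln_gt0; rewrite ltr1n.
split.
  have : (kk%:R : R) <= log2 (n%:R : R).
    rewrite /log2 ler_pdivlMr // mulrC mulr_natr -lnXn ?ltr0n //.
    rewrite ler_ln ?posrE ?exprn_gt0 ?ltr0n //; last by rewrite (leq_trans _ kn).
    by rewrite -natrX ler_nat; apply: ltnW.
  by apply: lt_le_trans; lra.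
have : (kk%:R : R) + 1 <= n%:R by rewrite natr1 ler_nat.
move=> h; rewrite ltr_pdivlMr //; lra.
Qed.

Theorem theorem2 (R : realType) :
  liveness_q (@L_SE R) /\ liveness_q (@L_ME R) /\ liveness_q (@L_GE R).
Proof.
have main : forall q S, is_obs S -> exists M, is_program M /\ obs_le S M /\
    ratr q < SE R M /\ ratr q < ME R M /\ ratr q < GE R M.
  move=> q S oS; have [K HK] := key R q.
  have [M [pM [lM [n [Kn [e1 [e2 e3]]]]]]] := big_prog R K oS.
  by have [h1 h2] := HK n Kn; exists M; rewrite e1 e2 e3.
split; [|split] => q S oS; have [M [pM [lM [h1 [h2 h3]]]]] := main q S oS; by exists M.
Qed.
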